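(* For $1\le i\le N$ and every holomorphic $V_\tau$-valued function $f$ on $\Omega$, $$L(x)\bigl(\mathcal{U}_i-1-\kappa\gamma\bigr)\bigl(L^{-1}f\bigr)(x)=x_i\partial_if(x)-\kappa\sum_{j<i}\frac{x_i}{x_i-x_j}\bigl(\sigma^M(i,j)f\bigr)(x)-\kappa\sum_{j>i}\frac{x_j}{x_i-x_j}\bigl(\sigma^M(i,j)f\bigr)(x).$$
   Context: Setup: $\tau$ is a partition of $N$ (not $(N)$, $(1^N)$) identified with the irreducible orthogonal representation of $\mathcal{S}_N$ on $V_\tau\cong\mathbb{C}^{n_\tau}$ (orthonormal basis), $\tau(i,j):=\tau((i,j))$. $c(i,T)=(\text{column of }i)-(\text{row of }i)$ in a standard tableau $T$, $S_1(\tau)=\sum_ic(i,T)$, $\gamma=S_1(\tau)/N$. $\mathcal{S}_N$ acts on $x$ by $(xw)_i=x_{w(i)}$. $\mathbb{C}^N_{reg}=\{x\in(\mathbb{C}\setminus\{0\})^N:x_i\neq x_j,\ i\ne j\}$; $\Omega\subset\mathbb{C}^N_{reg}$ is open with $\Omega w=\Omega$ for all $w$. $L:\Omega\to GL_{n_\tau}(\mathbb{C})$ is holomorphic and satisfies $\partial_iL(x)=\kappa L(x)\bigl\{\sum_{j\ne i}\frac{\tau(i,j)}{x_i-x_j}-\frac{\gamma}{x_i}I\bigr\}$, $1\le i\le N$ ($\kappa\in\mathbb{R}$). $M:\mathcal{S}_N\times\Omega\to GL_{n_\tau}(\mathbb{C})$ is locally constant in $x$ with $M(I,x)=I$, $M(w_1w_2,x)=M(w_2,xw_1)M(w_1,x)$,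 and $L(xw)=M(w,x)L(x)\tau(w)$. $(\sigma^M(w)f)(x)=M(w,x)^{-1}f(xw)$. The operators $\mathcal{D}_i g(x)=\partial_ig(x)+\kappa\sum_{j\ne i}\tau(i,j)\frac{g(x)-g(x(i,j))}{x_i-x_j}$ and $\mathcal{U}_ig(x)=\mathcal{D}_i(x_ig)(x)-\kappa\sum_{j<i}\tau(i,j)g(x(i,j))$ are applied to holomorphic $V_\tau$-valued functions $g$ on $\Omega$. *)

(* Defs.v *)
From HB Require Import structures.
From mathcomp Require Import all_boot all_order all_algebra all_fingroup.
From Stdlib Require Import ClassicalEpsilon.
Set Implicit Arguments. Unset Strict Implicit. Unset Printing Implicit Defensive.
Import Order.TTheory GRing.Theory Num.Theory.
Local Open Scope ring_scope.

(* Points of C^N are functions 'I_N -> C (coordinates indexed 0..N-1). *)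

Definition xact (C : numClosedFieldType) (N : nat) (x : 'I_N -> C)
  (w : {perm 'I_N}) : 'I_N -> C := fun i => x (w i).

(* paper's product w1 w2 = w1 \o w2 (mathcomp's (w2 * w1)%g) *)
Definition permcomp (N : nat) (w1 w2 : {perm 'I_N}) : {perm 'I_N} := (w2 * w1)%g.

Definition shift (C : numClosedFieldType) (N : nat) (x : 'I_N -> C)
  (i : 'I_N) (t : C) : 'I_N -> C := fun k => if k == i then x k + t else x k.

Definition has_pderiv (C : numClosedFieldType) (N : nat) (h : ('I_N -> C) -> C)
  (i : 'I_N) (x : 'I_N -> C) (d : C) : Prop :=
  forall eps : C, 0 < eps -> exists2 delta : C, 0 < delta &
    forall t : C, (0 < `|t|) && (`|t| < delta) ->
      `|(h (shift x i t) - h x) / t - d| <= eps.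

Definition pderiv (C : numClosedFieldType) (N : nat) (h : ('I_N -> C) -> C)
  (i : 'I_N) (x : 'I_N -> C) : C :=
  epsilon (inhabits 0) (has_pderiv h i x).

Definition pderivM (C : numClosedFieldType) (N p q : nat)
  (g : ('I_N -> C) -> 'M[C]_(p, q)) (i : 'I_N) (x : 'I_N -> C) : 'M[C]_(p, q) :=
  \matrix_(a < p, b < q) pderiv (fun y => g y a b) i x.

Definition holo_at (C : numClosedFieldType) (N : nat) (h : ('I_N -> C) -> C)
  (x : 'I_N -> C) : Prop :=
  exists d : 'I_N -> C, forall eps : C, 0 < eps -> exists2 delta : C, 0 < delta &
    forall y : 'I_N -> C, (forall k, `|y k - x k| < delta) ->
      `|h y - h x - \sum_k (y k - x k) * d k| <= eps * \sum_k `|y k - x k|.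

Definition holoM (C : numClosedFieldType) (N p q : nat)
  (Omega : ('I_N -> C) -> Prop) (g : ('I_N -> C) -> 'M[C]_(p, q)) : Prop :=
  forall x, Omega x -> forall a b, holo_at (fun y => g y a b) x.

Definition is_open (C : numClosedFieldType) (N : nat) (Omega : ('I_N -> C) -> Prop) : Prop :=
  forall x, Omega x -> exists2 delta : C, 0 < delta &
    forall y, (forall k, `|y k - x k| < delta) -> Omega y.

Definition regular (C : numClosedFieldType) (N : nat) (x : 'I_N -> C) : Prop :=
  (forall k, x k != 0) /\ (forall k l, k != l -> x k != x l).

Definition is_partition (N : nat) (lam : seq nat) : bool :=
  [&& sorted geq lam, all (fun m => 0 < m)%N lam & sumn lam == N].

(* cell (row r, column c), 0-indexed *)
Definition in_shape (lam : seq nat) (r c : nat) : bool :=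
  (r < size lam)%N && (c < nth 0%N lam r)%N.

(* a tableau: entry k (0..N-1) sits at cell (row, column) = T k *)
Definition tableau (N : nat) := {ffun 'I_N -> 'I_N * 'I_N}.

Definition is_SYT (N : nat) (lam : seq nat) (T : tableau N) : bool :=
  [&& [forall k, in_shape lam (T k).1 (T k).2],
      injectiveb T,
      [forall r : 'I_N, forall c : 'I_N, in_shape lam r c ==> [exists k, T k == (r, c)]] &
      [forall k, forall l,
         ((T k).1 <= (T l).1)%N ==> ((T k).2 <= (T l).2)%N ==> (k <= l)%N]].

Definition content (C : numClosedFieldType) (N : nat) (T : tableau N) (k : 'I_N) : C :=
  ((T k).2 : nat)%:R - ((T k).1 : nat)%:R.

(* S_1 = sum of the contents of all cells (= sum_k c(k,T) for any SYT T) *)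
Definition S1 (lam : seq nat) : int :=
  \sum_(r < size lam) \sum_(c < nth 0%N lam r) (c%:Z - r%:Z).

Definition gamma (C : numClosedFieldType) (N : nat) (lam : seq nat) : C :=
  (S1 lam)%:~R / N%:R.

Definition is_rep (C : numClosedFieldType) (N n : nat)
  (tau : {perm 'I_N} -> 'M[C]_n) : Prop :=
  tau 1%g = 1%:M /\ forall w1 w2, tau (permcomp w1 w2) = tau w1 *m tau w2.

(* tau is Young's orthogonal form of the partition lam, in the orthonormal
   basis of C^n indexed (via e) by the standard tableaux of shape lam *)
Definition young_rep (C : numClosedFieldType) (N n : nat) (lam : seq nat)
  (tau : {perm 'I_N} -> 'M[C]_n) : Prop :=
  exists e : 'I_n -> tableau N,
    injective e /\ (forall T, is_SYT lam T <-> exists a, e a = T) /\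
    forall (k k1 : 'I_N), (k1 : nat) = (k : nat).+1 -> forall a : 'I_n,
      let rho := content C (e a) k1 - content C (e a) k in
      tau (tperm k k1) *m delta_mx a (ord0 : 'I_1) =
        rho^-1 *: delta_mx a (ord0 : 'I_1)
        + sqrtC (1 - rho ^- 2) *:
            \sum_(b | e b == [ffun m => e a (tperm k k1 m)]) delta_mx b (ord0 : 'I_1).

Definition Dop (C : numClosedFieldType) (N n : nat) (kappa : C)
  (tau : {perm 'I_N} -> 'M[C]_n) (g : ('I_N -> C) -> 'cV[C]_n)
  (i : 'I_N) (x : 'I_N -> C) : 'cV[C]_n :=
  pderivM g i x
  + kappa *: \sum_(j | j != i)
      (x i - x j)^-1 *: (tau (tperm i j) *m (g x - g (xact x (tperm i j)))).

Definition Uop (C : numClosedFieldType) (N n : nat) (kappa : C)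
  (tau : {perm 'I_N} -> 'M[C]_n) (g : ('I_N -> C) -> 'cV[C]_n)
  (i : 'I_N) (x : 'I_N -> C) : 'cV[C]_n :=
  Dop kappa tau (fun y => y i *: g y) i x
  - kappa *: \sum_(j : 'I_N | (j < i)%N) tau (tperm i j) *m g (xact x (tperm i j)).

Definition sigmaM (C : numClosedFieldType) (N n : nat)
  (M : {perm 'I_N} -> ('I_N -> C) -> 'M[C]_n) (w : {perm 'I_N})
  (f : ('I_N -> C) -> 'cV[C]_n) (x : 'I_N -> C) : 'cV[C]_n :=
  invmx (M w x) *m f (xact x w).

(* Main.v *)
Require Import Defs.
From HB Require Import structures.
From mathcomp Require Import all_boot all_order all_algebra all_fingroup.
From mathcomp Require Import all_classical all_reals all_analysis.
From Stdlib Require Import ClassicalEpsilon.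
From mathcomp Require Import ring.
Import Order.TTheory GRing.Theory Num.Theory.
Import numFieldNormedType.Exports.
Local Open Scope classical_set_scope.
Local Open Scope ring_scope.
Set Implicit Arguments. Unset Strict Implicit. Unset Printing Implicit Defensive.
Section S.
Variable C : numClosedFieldType.
Definition lim0 (phi : C -> C) (l : C) := phi t @[t --> (0:C)^'] --> l.

Lemma lim0P phi l : lim0 phi l <->
  forall eps : C, 0 < eps -> exists2 delta : C, 0 < delta &
    forall t : C, (0 < `|t|) && (`|t| < delta) -> `|phi t - l| <= eps.
Proof.
rewrite /lim0; split.
- move=> /cvgrPdist_le H eps e0; have := H eps e0.
  move=> /nbhs_ballP [d d0 Hd]; exists d => // t /andP[t0 td].
  rewrite distrC; apply: Hd; last by rewrite -normr_gt0.
  by rewrite /ball /= sub0r normrN.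
- move=> H; apply/cvgrPdist_le => eps e0; have [d d0 Hd] := H eps e0.
  apply/nbhs_ballP; exists d => // t /= bt tn0; rewrite distrC; apply: Hd.
  rewrite normr_gt0 tn0 /=; move: bt; by rewrite /ball /= sub0r normrN.
Qed.

Lemma lim0_near phi psi l : (\forall t \near (0:C)^', phi t = psi t) ->
  lim0 phi l -> lim0 psi l.
Proof. move=> H1 H2; apply: cvg_trans H2; exact: near_eq_cvg. Qed.

Lemma lim0_ext phi psi l : lim0 phi l -> (forall t, t != 0 -> phi t = psi t) ->
  lim0 psi l.
Proof.
move=> H0 H; apply: lim0_near H0; near=> t; apply: H.
near: t; exact: nbhs_dnbhs_neq.
Unshelve. all: by end_near.
Qed.

Lemma lim0_cst c : lim0 (fun _ => c) c.
Proof. exact: cvg_cst. Qed.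

Lemma lim0_id : lim0 id 0.
Proof. exact: cvg_within. Qed.

Lemma lim0_add phi psi a b : lim0 phi a -> lim0 psi b ->
  lim0 (fun t => phi t + psi t) (a + b).
Proof. move=> H1 H2; exact: cvgD. Qed.

Lemma lim0_mul phi psi a b : lim0 phi a -> lim0 psi b ->
  lim0 (fun t => phi t * psi t) (a * b).
Proof. move=> H1 H2; exact: cvgM. Qed.

Lemma lim0_opp phi a : lim0 phi a -> lim0 (fun t => - phi t) (- a).
Proof. move=> H1; exact: cvgN. Qed.

Lemma lim0_inv phi a : a != 0 -> lim0 phi a -> lim0 (fun t => (phi t)^-1) a^-1.
Proof. move=> a0 H1; exact: cvgV. Qed.

Lemma lim0_unique phi a b : lim0 phi a -> lim0 phi b -> a = b.
Proof. move=> H1 H2; apply: (cvg_unique _ H1 H2). exact: norm_hausdorff. Qed.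

Lemma lim0_sumseq (I : eqType) (r : seq I) (P : pred I) (F : I -> C -> C) (l : I -> C) :
  (forall i, lim0 (F i) (l i)) ->
  lim0 (fun t => \sum_(i <- r | P i) F i t) (\sum_(i <- r | P i) l i).
Proof.
move=> H; elim: r => [|j r IH].
  rewrite big_nil. eapply lim0_ext. exact: (@lim0_cst 0). move=> t _; by rewrite big_nil.
rewrite big_cons; case: ifP => Pj.
  apply: (lim0_ext (lim0_add (H j) IH)) => t _; by rewrite big_cons Pj.
apply: (lim0_ext IH) => t _; by rewrite big_cons Pj.
Qed.

Lemma lim0_prodseq (I : eqType) (r : seq I) (P : pred I) (F : I -> C -> C) (l : I -> C) :
  (forall i, lim0 (F i) (l i)) ->
  lim0 (fun t => \prod_(i <- r | P i) F i t) (\prod_(i <- r | P i) l i).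
Proof.
move=> H; elim: r => [|j r IH].
  rewrite big_nil; apply: (lim0_ext (@lim0_cst 1)) => t _; by rewrite big_nil.
rewrite big_cons; case: ifP => Pj.
  apply: (lim0_ext (lim0_mul (H j) IH)) => t _; by rewrite big_cons Pj.
apply: (lim0_ext IH) => t _; by rewrite big_cons Pj.
Qed.

Arguments lim0_sumseq {I} r P F l.
Arguments lim0_prodseq {I} r P F l.

Definition mlim0 p q (Phi : C -> 'M[C]_(p,q)) (D : 'M[C]_(p,q)) :=
  forall a b, lim0 (fun t => Phi t a b) (D a b).

Lemma mlim0_ext p q (Phi Psi : C -> 'M[C]_(p,q)) D : mlim0 Phi D ->
  (forall t, t != 0 -> Phi t = Psi t) -> mlim0 Psi D.
Proof. move=> H E a b; apply: (lim0_ext (H a b)) => t t0; by rewrite E. Qed.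

Lemma mlim0_near p q (Phi Psi : C -> 'M[C]_(p,q)) D : mlim0 Phi D ->
  (\forall t \near (0:C)^', Phi t = Psi t) -> mlim0 Psi D.
Proof.
move=> H E a b; apply: lim0_near (H a b).
by apply: filterS E => t ->.
Qed.

Lemma mlim0_cst p q (D : 'M[C]_(p,q)) : mlim0 (fun _ => D) D.
Proof. move=> a b; exact: lim0_cst. Qed.

Lemma mlim0_add p q (A B : C -> 'M[C]_(p,q)) A0 B0 : mlim0 A A0 -> mlim0 B B0 ->
  mlim0 (fun t => A t + B t) (A0 + B0).
Proof.
move=> H1 H2 a b; rewrite mxE; apply: (lim0_ext (lim0_add (H1 a b) (H2 a b))).
by move=> t _; rewrite mxE.
Qed.

Lemma mlim0_opp p q (A : C -> 'M[C]_(p,q)) A0 : mlim0 A A0 ->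
  mlim0 (fun t => - A t) (- A0).
Proof.
move=> H1 a b; rewrite mxE; apply: (lim0_ext (lim0_opp (H1 a b))).
by move=> t _; rewrite mxE.
Qed.

Lemma mlim0_sub p q (A B : C -> 'M[C]_(p,q)) A0 B0 : mlim0 A A0 -> mlim0 B B0 ->
  mlim0 (fun t => A t - B t) (A0 - B0).
Proof. move=> H1 H2; exact: mlim0_add H1 (mlim0_opp H2). Qed.

Lemma mlim0_scalef p q (s : C -> C) c (A : C -> 'M[C]_(p,q)) A0 : lim0 s c -> mlim0 A A0 ->
  mlim0 (fun t => s t *: A t) (c *: A0).
Proof.
move=> H1 H2 a b; rewrite mxE; apply: (lim0_ext (lim0_mul H1 (H2 a b))).
by move=> t _; rewrite mxE.
Qed.

Lemma mlim0_scale p q c (A : C -> 'M[C]_(p,q)) A0 : mlim0 A A0 ->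
  mlim0 (fun t => c *: A t) (c *: A0).
Proof. move=> H; exact: mlim0_scalef (@lim0_cst c) H. Qed.

Lemma mlim0_mul p q r (A : C -> 'M[C]_(p,q)) (B : C -> 'M[C]_(q,r)) A0 B0 :
  mlim0 A A0 -> mlim0 B B0 -> mlim0 (fun t => A t *m B t) (A0 *m B0).
Proof.
move=> H1 H2 a b; rewrite mxE.
apply: (lim0_ext (lim0_sumseq _ _ (fun k t => A t a k * B t k b) _ _)).
  by move=> k; exact: lim0_mul (H1 a k) (H2 k b).
by move=> t _; rewrite mxE.
Qed.

Lemma lim0_det n (A : C -> 'M[C]_n) A0 : mlim0 A A0 ->
  lim0 (fun t => \det (A t)) (\det A0).
Proof.
move=> H; rewrite /determinant.
apply: (lim0_sumseq _ _ (fun (s : 'S_n) t => (-1) ^+ s * \prod_i A t i (s i)) _) => s.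
apply: lim0_mul; first exact: lim0_cst.
apply: (lim0_prodseq _ _ (fun i t => A t i (s i)) _) => i; exact: H.
Qed.

Lemma mlim0_adj n (A : C -> 'M[C]_n) A0 : mlim0 A A0 ->
  mlim0 (fun t => \adj (A t)) (\adj A0).
Proof.
move=> H a b; rewrite mxE /cofactor.
apply: (lim0_ext (lim0_mul (@lim0_cst ((-1) ^+ (b + a))) (lim0_det (A := fun t => row' b (col' a (A t))) _))).
  by move=> c d; rewrite !mxE; apply: (lim0_ext (H _ _)) => t _; rewrite !mxE.
by move=> t _; rewrite mxE.
Qed.

Lemma mlim0_invmx n (A : C -> 'M[C]_n) A0 : mlim0 A A0 -> A0 \in unitmx ->
  (\forall t \near (0:C)^', A t \in unitmx) ->
  mlim0 (fun t => invmx (A t)) (invmx A0).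
Proof.
move=> H U0 U; rewrite {2}/invmx U0.
apply: (mlim0_near (mlim0_scalef (lim0_inv _ (lim0_det H)) (mlim0_adj H))).
  by rewrite -unitfE -unitmxE.
by apply: filterS U => t Ut; rewrite /invmx Ut.
Qed.

Lemma mderiv_cont p q (Phi : C -> 'M[C]_(p,q)) D :
  mlim0 (fun t => t^-1 *: (Phi t - Phi 0)) D -> mlim0 Phi (Phi 0).
Proof.
move=> H.
have H2 := mlim0_add (@mlim0_cst _ _ (Phi 0)) (mlim0_scalef lim0_id H).
rewrite scale0r addr0 in H2; apply: (mlim0_ext H2) => t t0.
by rewrite scalerA mulfV // scale1r addrC subrK.
Qed.

Lemma shift0 N (x : 'I_N -> C) (i : 'I_N) : Defs.shift x i (0:C) = x.
Proof. apply: funext => k; rewrite /Defs.shift; case: (k == i) => //; by rewrite addr0. Qed.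

Lemma pderiv_eq N (h : ('I_N -> C) -> C) (i : 'I_N) (x : 'I_N -> C) d : has_pderiv h i x d -> pderiv h i x = d.
Proof.
move=> H; have H2 : has_pderiv h i x (pderiv h i x).
  by rewrite /pderiv; apply: epsilon_spec; exists d.
apply: (@lim0_unique (fun t => (h (Defs.shift x i t) - h x) / t)); by apply/lim0P.
Qed.

Lemma holo_has N (h : ('I_N -> C) -> C) (x : 'I_N -> C) (i : 'I_N) : holo_at h x -> exists d, has_pderiv h i x d.
Proof.
case=> d Hd; exists (d i) => eps e0; have [del d0 Hdel] := Hd eps e0.
exists del => // t /andP[t0 td].
have Ey : forall k, Defs.shift x i t k - x k = (k == i)%:R * t.
  move=> k; rewrite /Defs.shift; case: (k == i); first by rewrite mul1r addrAC subrr add0r.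
  by rewrite mul0r subrr.
have := Hdel (Defs.shift x i t) _.
have -> : \sum_k (Defs.shift x i t k - x k) * d k = t * d i.
  rewrite (bigD1 i) //= big1 ?addr0 => [|k /negbTE kn]; rewrite Ey ?eqxx ?kn; first by rewrite mul1r.
  by rewrite !mul0r.
have -> : \sum_k `|Defs.shift x i t k - x k| = `|t|.
  rewrite (bigD1 i) //= big1 ?addr0 => [|k /negbTE kn]; rewrite Ey ?eqxx ?kn; first by rewrite mul1r.
  by rewrite mul0r normr0.
have t0' : t != 0 by rewrite -normr_gt0.
move=> H; have {}H := H _.
have : `|h (Defs.shift x i t) - h x - t * d i| <= eps * `|t|.
  apply: H => k; rewrite Ey; case: (k == i); rewrite ?mul1r ?mul0r ?normr0 //.
move=> H2.
have -> : (h (Defs.shift x i t) - h x) / t - d i = (h (Defs.shift x i t) - h x - t * d i) / t.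
  by rewrite [RHS]mulrBl [t * _]mulrC mulfK // mulrBl.
by rewrite normrM normrV ?unitfE // ler_pdivrMr.
Qed.

Lemma holo_lim0 N (h : ('I_N -> C) -> C) (x : 'I_N -> C) (i : 'I_N) : holo_at h x ->
  lim0 (fun t => (h (Defs.shift x i t) - h x) / t) (pderiv h i x).
Proof.
move=> /(holo_has i) [d Hd]; rewrite (pderiv_eq Hd); by apply/lim0P.
Qed.

Lemma holoM_mlim0 N p q (Omega : ('I_N -> C) -> Prop) (F : ('I_N -> C) -> 'M[C]_(p,q))
  (x : 'I_N -> C) (i : 'I_N) : holoM Omega F -> Omega x ->
  mlim0 (fun t => t^-1 *: (F (Defs.shift x i t) - F (Defs.shift x i 0))) (pderivM F i x).
Proof.
move=> HF Hx a b; rewrite /pderivM mxE shift0.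
apply: (lim0_ext (@holo_lim0 _ _ _ i (HF x Hx a b))) => t _.
by rewrite !mxE mulrC.
Qed.

Lemma mlim0_pderivM N p q (F : ('I_N -> C) -> 'M[C]_(p,q)) (x : 'I_N -> C) (i : 'I_N) D :
  mlim0 (fun t => t^-1 *: (F (Defs.shift x i t) - F x)) D -> pderivM F i x = D.
Proof.
move=> H; apply/matrixP => a b; rewrite mxE; apply: pderiv_eq; apply/lim0P.
apply: (lim0_ext (H a b)) => t _; by rewrite !mxE mulrC.
Qed.

Lemma near_open N (Omega : ('I_N -> C) -> Prop) (x : 'I_N -> C) (i : 'I_N) :
  is_open Omega -> Omega x -> \forall t \near (0:C)^', Omega (Defs.shift x i t).
Proof.
move=> Ho Hx; apply: nbhs_dnbhs; have [d d0 Hd] := Ho x Hx.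
apply/nbhs_ballP; exists d => // t /= bt; apply: Hd => k.
rewrite /Defs.shift; case: (k == i).
  by move: bt; rewrite /ball /= sub0r normrN addrAC subrr add0r.
by rewrite subrr normr0.
Qed.

Lemma pderiv_comp N n (Omega : ('I_N -> C) -> Prop) (L : ('I_N -> C) -> 'M[C]_n)
  (f : ('I_N -> C) -> 'cV[C]_n) (x : 'I_N -> C) (i : 'I_N) :
  is_open Omega -> holoM Omega L -> holoM Omega f -> (forall y, Omega y -> L y \in unitmx) ->
  Omega x ->
  pderivM (fun y => y i *: (invmx (L y) *m f y)) i x =
  x i *: (- (invmx (L x) *m pderivM L i x *m invmx (L x)) *m f x
          + invmx (L x) *m pderivM f i x) + invmx (L x) *m f x.
Proof.
move=> Ho HL Hf HU Hx; apply: mlim0_pderivM.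
set X := Defs.shift x i.
have dL := holoM_mlim0 (i:=i) HL Hx; have df := holoM_mlim0 (i:=i) Hf Hx.
rewrite !shift0 -/X in dL df.
have cL : mlim0 (fun t => L (X t)) (L x).
  have := @mderiv_cont _ _ (fun t => L (X t)) (pderivM L i x); rewrite /X shift0; apply.
  exact: dL.
have cf : mlim0 (fun t => f (X t)) (f x).
  have := @mderiv_cont _ _ (fun t => f (X t)) (pderivM f i x); rewrite /X shift0; apply.
  exact: df.
have nO := near_open i Ho Hx; rewrite -/X in nO.
have cG : mlim0 (fun t => invmx (L (X t))) (invmx (L x)).
  apply: mlim0_invmx cL (HU _ Hx) _; by apply: filterS nO => t /HU.
have dG : mlim0 (fun t => t^-1 *: (invmx (L (X t)) - invmx (L x)))
     (- (invmx (L x) *m pderivM L i x *m invmx (L x))).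
  apply: (mlim0_near (mlim0_opp (mlim0_mul (mlim0_mul cG dL) (@mlim0_cst _ _ (invmx (L x)))))).
  apply: filterS nO => t Ot.
  rewrite -scalemxAr -scalemxAl -scalerN; congr (_ *: _).
  rewrite mulmxBr mulVmx ?HU // mulmxBl mul1mx -mulmxA mulmxV ?HU // mulmx1 opprB.
  done.
have dP : mlim0 (fun t => t^-1 *: (invmx (L (X t)) *m f (X t) - invmx (L x) *m f x))
     (- (invmx (L x) *m pderivM L i x *m invmx (L x)) *m f x + invmx (L x) *m pderivM f i x).
  apply: (mlim0_ext (mlim0_add (mlim0_mul dG cf) (mlim0_mul (@mlim0_cst _ _ (invmx (L x))) df))).
  move=> t _.
  rewrite -scalemxAl -scalemxAr -scalerDr; congr (_ *: _).
  by rewrite mulmxBl mulmxBr addrA subrK.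
have cP : mlim0 (fun t => invmx (L (X t)) *m f (X t)) (invmx (L x) *m f x) := mlim0_mul cG cf.
apply: (mlim0_ext (mlim0_add (mlim0_scale (c:=x i) dP) cP)) => t t0.
have -> : X t i = x i + t by rewrite /X /Defs.shift eqxx.
set P := invmx (L (X t)) *m f (X t); set P0 := invmx (L x) *m f x.
by rewrite [in RHS]scalerDl [in RHS]addrAC -[in RHS]scalerBr [in RHS]scalerDr !scalerA mulVf // scale1r mulrC.
Qed.

Lemma lin_id n (xi k c g : C) (Tu u v Y W : 'cV[C]_n) : c * xi = g ->
  xi *: (-(k *: (Tu - c *: u)) + v) + u + k *: (xi *: Tu - Y) - k *: W - (1 + k * g) *: u
  = xi *: v - k *: (Y + W).
Proof.
move=> <-; apply/matrixP => a b; rewrite !mxE; ring.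
Qed.
End S.

Lemma sum_id (C : numClosedFieldType) N n (x : 'I_N -> C) (i : 'I_N) (w : 'I_N -> 'cV[C]_n) :
  (forall j, j != i -> x i - x j != 0) ->
  \sum_(j | j != i) (x j / (x i - x j)) *: w j + \sum_(j : 'I_N | (j < i)%N) w j
  = \sum_(j : 'I_N | (j < i)%N) (x i / (x i - x j)) *: w j
    + \sum_(j : 'I_N | (i < j)%N) (x j / (x i - x j)) *: w j.
Proof.
move=> Hd; rewrite (bigID (fun j : 'I_N => (j < i)%N)) /=.
have -> : \sum_(j | (j != i) && (j < i)%N) (x j / (x i - x j)) *: w j
        = \sum_(j : 'I_N | (j < i)%N) (x j / (x i - x j)) *: w j.
  apply: eq_bigl => j; case: ltngtP => //= h; rewrite ?andbT ?andbF //.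
    by apply/eqP => E; move: h; rewrite E ltnn.
have -> : \sum_(j | (j != i) && ~~ (j < i)%N) (x j / (x i - x j)) *: w j
        = \sum_(j : 'I_N | (i < j)%N) (x j / (x i - x j)) *: w j.
  apply: eq_bigl => j; case: ltngtP => //= h; rewrite ?andbT ?andbF //.
  - by apply/eqP => E; move: h; rewrite E ltnn.
  - by rewrite (_ : j = i) ?eqxx //; apply: val_inj.
rewrite addrAC -big_split /=; congr (_ + _); apply: eq_bigr => j ji.
have jn : j != i by apply/eqP => E; move: ji; rewrite E ltnn.
rewrite -{2}[w j]scale1r -scalerDl; congr (_ *: _).
by field; exact: Hd.
Qed.
Theorem proposition4 (C : numClosedFieldType) (N n : nat) (lam : seq nat)
  (tau : {perm 'I_N} -> 'M[C]_n) (kappa : C)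
  (Omega : ('I_N -> C) -> Prop) (L : ('I_N -> C) -> 'M[C]_n)
  (M : {perm 'I_N} -> ('I_N -> C) -> 'M[C]_n) :
  is_partition N lam -> lam != [:: N] -> lam != nseq N 1%N ->
  is_rep tau -> young_rep lam tau ->
  kappa \is Num.real ->
  is_open Omega -> (forall x, Omega x -> regular x) ->
  (forall w x, Omega x <-> Omega (xact x w)) ->
  holoM Omega L -> (forall x, Omega x -> L x \in unitmx) ->
  (forall x i, Omega x ->
     pderivM L i x =
       kappa *: (L x *m (\sum_(j | j != i) (x i - x j)^-1 *: tau (tperm i j)
                         - (gamma C N lam / x i) *: 1%:M))) ->
  (forall w x, Omega x -> M w x \in unitmx) ->
  (forall w x, Omega x -> exists2 delta : C, 0 < delta &
     forall y, Omega y -> (forall k, `|y k - x k| < delta) -> M w y = M w x) ->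
  (forall x, Omega x -> M 1%g x = 1%:M) ->
  (forall w1 w2 x, Omega x -> M (permcomp w1 w2) x = M w2 (xact x w1) *m M w1 x) ->
  (forall w x, Omega x -> L (xact x w) = M w x *m L x *m tau w) ->
  forall (i : 'I_N) (f : ('I_N -> C) -> 'cV[C]_n), holoM Omega f ->
  forall x, Omega x ->
    L x *m (Uop kappa tau (fun y => invmx (L y) *m f y) i x
            - (1 + kappa * gamma C N lam) *: (invmx (L x) *m f x))
    = x i *: pderivM f i x
      - kappa *: \sum_(j : 'I_N | (j < i)%N) (x i / (x i - x j)) *: sigmaM M (tperm i j) f x
      - kappa *: \sum_(j : 'I_N | (i < j)%N) (x j / (x i - x j)) *: sigmaM M (tperm i j) f x.
Proof.
move=> Hpart Hn1 Hn2 Hrep Hyoung Hk Ho Hreg Hsym HL HLU HdL HMU HMloc HM1 HMc HLM i f Hf x Hx.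
rewrite /Uop /Dop /=.
rewrite (pderiv_comp i Ho HL Hf HLU Hx) HdL //.
have Hd : forall j, j != i -> x i - x j != 0.
  by move=> j ji; rewrite subr_eq0 eq_sym; exact: (Hreg x Hx).2 j i ji.
have xi0 : x i != 0 by exact: (Hreg x Hx).1 i.
have Ux := HLU x Hx.
set G0 := invmx (L x).
have Kj : forall j, tau (tperm i j) *m (invmx (L (xact x (tperm i j))) *m f (xact x (tperm i j)))
   = G0 *m sigmaM M (tperm i j) f x.
  move=> j; set w := tperm i j.
  have Ow : Omega (xact x w) by apply: (proj1 (Hsym w x)).
  have Uw := HLU _ Ow; have UM := HMU w x Hx.
  have E : L x *m tau w = invmx (M w x) *m L (xact x w).
    by rewrite HLM // -!mulmxA mulKmx.
  apply: (canRL (mulKmx Ux)); rewrite mulmxA E -mulmxA mulKVmx //.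
have xa : forall j, xact x (tperm i j) i = x j by move=> j; rewrite /xact tpermL.
set T := \sum_(j | j != i) (x i - x j)^-1 *: tau (tperm i j).
set c := gamma C N lam / x i.
set u := G0 *m f x.
have E1 : G0 *m (kappa *: (L x *m (T - c *: 1%:M))) *m G0 *m f x = kappa *: (T *m u - c *: u).
  rewrite -scalemxAr -!scalemxAl; congr (_ *: _).
  rewrite !mulmxA mulVmx // mul1mx !mulmxBl scalemx1 mul_scalar_mx -scalemxAl.
  by rewrite -mulmxA.
have E2 : \sum_(j | j != i) (x i - x j)^-1 *: (tau (tperm i j) *m (x i *: u
     - xact x (tperm i j) i *: (invmx (L (xact x (tperm i j))) *m f (xact x (tperm i j)))))
   = x i *: (T *m u) - G0 *m \sum_(j | j != i) (x j / (x i - x j)) *: sigmaM M (tperm i j) f x.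
  rewrite /T mulmx_suml mulmx_sumr !scaler_sumr -sumrB; apply: eq_bigr => j ji.
  rewrite xa mulmxBr -scalemxAr -scalemxAr Kj -scalemxAl -scalemxAr scalerBr !scalerA.
  by congr (_ *: _ - _ *: _); rewrite mulrC.
have E3 : \sum_(j : 'I_N | (j < i)%N) tau (tperm i j) *m (invmx (L (xact x (tperm i j)))
     *m f (xact x (tperm i j))) = G0 *m \sum_(j : 'I_N | (j < i)%N) sigmaM M (tperm i j) f x.
  by rewrite mulmx_sumr; apply: eq_bigr => j _; rewrite Kj.
rewrite mulNmx E1 E2 E3 lin_id; last by rewrite /c mulfVK.
rewrite -mulmxDr [kappa *: (G0 *m _)]scalemxAr [x i *: (G0 *m _)]scalemxAr -mulmxBr mulKVmx // sum_id //.
by rewrite scalerDr opprD addrA.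
Qed.
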